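(* If $n>2$ is odd, then all eigenvalues of the operator $c_1\star$ of quantum multiplication by the first Chern class acting on the small quantum cohomology $\operatorname{QH}(\operatorname{Gr}(2,n))$ have algebraic multiplicity one.
   Context: $\operatorname{QH}(\operatorname{Gr}(2,n))$ denotes the small quantum cohomology of the complex Grassmannian of 2-planes in $\mathbb{C}^n$ with complex coefficients (quantum parameter specialized to $1$, as in the monotone setting); it has complex dimension $\binom{n}{2}$. *)

(* Defs.v *)
From HB Require Import structures.
From mathcomp Require Import all_boot all_order all_algebra algC.
Set Implicit Arguments. Unset Strict Implicit. Unset Printing Implicit Defensive.
Import Order.TTheory GRing.Theory Num.Theory.
Local Open Scope ring_scope.

(* Schubert basis of H^*(Gr(2,n)): partitions (a,b) with n-2 >= a >= b >= 0,
   encoded as pairs (a,b) of ordinals < n-1 with b <= a.  Its cardinality is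
   binomial(n,2). *)
Definition gr2_index (n : nat) : finType :=
  {p : 'I_(n.-1) * 'I_(n.-1) | (p.2 <= p.1)%N}.

(* Quantum Monk/Pieri rule for Gr(2,n), with q = 1: the coefficient of
   sigma_mu in sigma_1 * sigma_lam, where
   sigma_1 * sigma_(a,b) = sigma_(a+1,b) + sigma_(a,b+1)
                           + [a = n-2, b >= 1] q sigma_(b-1,0)
   (terms outside the (n-2)x2 box / non-partitions are omitted, which is
   automatic since mu ranges over the index set). *)
Definition qmonk2 (n : nat) (lam mu : nat * nat) : nat :=
  ((mu == (lam.1.+1, lam.2)) : nat)
  + ((mu == (lam.1, lam.2.+1)) : nat)
  + [&& lam.1 == (n - 2)%N, (0 < lam.2)%N & mu == (lam.2.-1, 0%N)].

Definition idx_pair (n : nat) (i : gr2_index n) : nat * nat :=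
  (nat_of_ord (val i).1, nat_of_ord (val i).2).

(* Matrix of quantum multiplication by sigma_1 on QH(Gr(2,n)) over C
   (algC), in the Schubert basis ordered by enum (gr2_index n);
   column j = image of the j-th basis vector. *)
Definition sigma1_mat (n : nat) : 'M[algC]_#|gr2_index n| :=
  \matrix_(i, j) (qmonk2 n (idx_pair (enum_val j)) (idx_pair (enum_val i)))%:R.

(* c_1(T Gr(2,n)) = n * sigma_1, so c_1 * is n times sigma_1 *. *)
Definition c1_mat (n : nat) : 'M[algC]_#|gr2_index n| :=
  n%:R *: sigma1_mat n.

(* Main.v *)
Require Import Defs.
From HB Require Import structures.
From mathcomp Require Import all_boot all_order all_algebra algC.
From mathcomp Require Import ring zify.
Import Order.TTheory GRing.Theory Num.Theory.
Local Open Scope ring_scope.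
Set Implicit Arguments. Unset Strict Implicit.

Section Eig.
Variable n : nat.
Hypothesis Hn : (2 < n)%N.

Definition valid2 (t : nat * nat) := ((t.1 < n.-1)%N && (t.2 <= t.1)%N).

Lemma idx_valid (p : gr2_index n) : valid2 (idx_pair p).
Proof. by case: p => [[a b] /= h]; rewrite /valid2 /idx_pair /= ltn_ord h. Qed.

Lemma idx_inj : injective (@idx_pair n).
Proof.
move=> [[a b] ha] [[c d] hc]; rewrite /idx_pair /= => -[e1 e2].
by apply: val_inj => /=; congr pair; apply: val_inj.
Qed.

Lemma sum_ind (F : nat * nat -> algC) t :
  \sum_(p : gr2_index n) F (idx_pair p) * ((idx_pair p == t) : nat)%:R
  = if valid2 t then F t else 0.
Proof.
case: ifP => vt.
  move: vt; rewrite /valid2; case: t => a b /= /andP[h1 h2].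
  pose p0 : gr2_index n := exist _ (Ordinal h1, Ordinal (leq_ltn_trans h2 h1)) h2.
  rewrite (bigD1 p0) //= big1 ?addr0.
    by rewrite /idx_pair /= eqxx mulr1.
  move=> p hp; case: eqP => [e|]; last by rewrite mulr0.
  by move: hp; rewrite -(inj_eq idx_inj) e /idx_pair eqxx.
apply: big1 => p _; case: eqP => [e|]; last by rewrite mulr0.
by move: (idx_valid p); rewrite e vt.
Qed.

Variables x y : algC.
Hypothesis hx : x ^+ n = -1.
Hypothesis hy : y ^+ n = -1.

Definition W (t : nat * nat) := x ^+ t.1.+1 * y ^+ t.2 - x ^+ t.2 * y ^+ t.1.+1.

Definition wv : 'rV[algC]_#|gr2_index n| := \row_k W (idx_pair (enum_val k)).

Lemma W_rec a b : (x + y) * W (a, b) = W (a.+1, b) + W (a, b.+1).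
Proof. rewrite /W /= !exprS; ring. Qed.

Lemma W_diag a : W (a, a.+1) = 0.
Proof. rewrite /W /=; ring. Qed.

Lemma W_top b : W (n.-1, b) = if (0 < b)%N then W (b.-1, 0%N) else 0.
Proof.
rewrite /W /= prednK ?(ltn_trans _ Hn) // hx hy.
case: b => [|b] /=; rewrite ?expr0; ring.
Qed.

Lemma key a b : valid2 (a, b) ->
  (if valid2 (a.+1, b) then W (a.+1, b) else 0)
  + (if valid2 (a, b.+1) then W (a, b.+1) else 0)
  + (if [&& a == (n - 2)%N & (0 < b)%N] then
       (if valid2 (b.-1, 0%N) then W (b.-1, 0%N) else 0) else 0)
  = (x + y) * W (a, b).
Proof.
rewrite /valid2 /= => /andP[ha hb].
rewrite W_rec (leqW hb) andbT ha /=.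
have -> : (b.+1 <= a)%N = (b != a) by rewrite ltn_neqAle hb andbT.
have Wd : (if b != a then W (a, b.+1) else 0) = W (a, b.+1).
  by case: eqVneq => [->|//]; rewrite W_diag.
rewrite Wd.
case: (ltnP a.+1 n.-1) => h1.
  have -> : (a == n - 2)%N = false.
    by apply/negbTE; move: h1; case: n Hn => [|[|m]] //= _; rewrite subn2 /=; lia.
  by rewrite andFb addr0.
have ea : a.+1 = n.-1 by apply/eqP; rewrite eqn_leq ha h1.
have -> : (a == n - 2)%N by move: ea; case: n Hn => [|[|m]] //= _; rewrite subn2 /=; lia.
rewrite add0r /= ea W_top.
case: (posnP b) => [->|bp] /=; first by rewrite addr0 add0r.
have -> : (b.-1 < n.-1)%N by move: hb ha; lia.
rewrite leq0n /=.
by rewrite addrC.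
Qed.

Lemma wv_eig : wv *m sigma1_mat n = (x + y) *: wv.
Proof.
apply/rowP => j; rewrite !mxE.
transitivity (\sum_(p : gr2_index n) W (idx_pair p) *
   (qmonk2 n (idx_pair (enum_val j)) (idx_pair p))%:R).
  rewrite [RHS](big_enum_val (fun p => W (idx_pair p) *
   (qmonk2 n (idx_pair (enum_val j)) (idx_pair p))%:R)).
  by apply: eq_bigr => k _; rewrite !mxE.
have := idx_valid (enum_val j).
case: (idx_pair (enum_val j)) => a b va.
rewrite -(key va).
rewrite /qmonk2 /=.
under eq_bigr do rewrite !natrD !mulrDr.
rewrite !big_split /= !sum_ind.
congr (_ + _).
case: (a == (n - 2)%N); case: (0 < b)%N => /=; rewrite ?sum_ind //;
  by apply: big1 => p _; rewrite mulr0.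
Qed.

Lemma eig_c1 : x != y -> eigenvalue (c1_mat n) (n%:R * (x + y)).
Proof.
move=> xy; apply/eigenvalueP; exists wv.
  by rewrite /c1_mat -scalemxAr wv_eig scalerA.
have h0 : (0 < n.-1)%N by move: Hn; lia.
pose p00 : gr2_index n := exist _ (Ordinal h0, Ordinal h0) (leqnn 0).
apply/eqP => /rowP /(_ (enum_rank p00)); rewrite !mxE enum_rankK /W /idx_pair /=.
by rewrite expr1 expr0 mulr1 mul1r => /eqP; rewrite subr_eq0 (negbTE xy).
Qed.

End Eig.

Lemma pair_eq (a b c d : algC) : a + b = c + d -> a * b = c * d ->
  (a = c /\ b = d) \/ (a = d /\ b = c).
Proof.
move=> h1 h2.
have : (a - c) * (a - d) = 0.
  have -> : (a - c) * (a - d) = a * a - a * (c + d) + c * d by ring.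
  by rewrite -h1 -h2; ring.
move/eqP; rewrite mulf_eq0 !subr_eq0 => /orP[/eqP e|/eqP e].
  by left; split => //; move: h1; rewrite e => /addrI.
by right; split => //; move: h1; rewrite e addrC => /addIr.
Qed.

Lemma unit_conj (m : nat) (w : algC) : (0 < m)%N -> w ^+ m = 1 -> w^* = w^-1.
Proof.
move=> m0 wm.
have nw : `|w| = 1.
  by apply/eqP; rewrite -(pexpr_eq1 m0) ?normr_ge0 // -normrX wm normr1.
by rewrite invC_norm nw expr1n invr1 mul1r.
Qed.

Lemma abcd (A B C D : algC) : A != 0 -> B != 0 -> C != 0 -> D != 0 ->
  A^-1 + B^-1 = C^-1 + D^-1 -> A + B = C + D -> A + B != 0 -> A * B = C * D.
Proof.
move=> a0 b0 c0 d0 hi hs s0.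
have e1 : A^-1 + B^-1 = (A + B) * (A * B)^-1 by field; rewrite a0 b0.
have e2 : C^-1 + D^-1 = (C + D) * (C * D)^-1 by field; rewrite c0 d0.
move: hi; rewrite e1 e2 -hs => /(mulfI s0) /invr_inj //.
Qed.

From mathcomp Require Import cyclotomic.

Lemma roots_inj (n : nat) (z : algC) (i j k l : nat) :
  odd n -> n.-primitive_root z -> (i < j < n)%N -> (k < l < n)%N ->
  z ^+ i + z ^+ j = z ^+ k + z ^+ l -> i = k /\ j = l.
Proof.
move=> on pz /andP[ij jn] /andP[kl ln] e.
have n0 : (0 < n)%N := prim_order_gt0 pz.
have zn : z ^+ n = 1 := prim_expr_order pz.
have un t : (z ^+ t) ^+ n = 1 by rewrite -exprM mulnC exprM zn expr1n.
have nz t : z ^+ t != 0.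
  apply/eqP => h; move: (un t); rewrite h expr0n gtn_eqF // => /eqP; rewrite eq_sym oner_eq0 //.
have cj : forall t, (z ^+ t)^* = (z ^+ t)^-1.
  by move=> t; apply: (unit_conj n0); exact: un.
have s0 : z ^+ i + z ^+ j != 0.
  apply/eqP => /eqP; rewrite addr_eq0 => /eqP h.
  move: (un i); rewrite h exprNn un -signr_odd on /= expr1 mulr1 => /eqP.
  by rewrite eq_sym -addr_eq0 -mulr2n pnatr_eq0.
have hi : (z ^+ i)^-1 + (z ^+ j)^-1 = (z ^+ k)^-1 + (z ^+ l)^-1.
  by rewrite -!cj -!rmorphD e.
have := abcd (nz i) (nz j) (nz k) (nz l) hi e s0.
have eqe a b : (a < n)%N -> (b < n)%N -> z ^+ a = z ^+ b -> a = b.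
  move=> an bn /eqP; rewrite (eq_prim_root_expr pz) !modn_small //; by move/eqP.
move/(pair_eq e) => [[h1 h2]|[h1 h2]].
  by split; apply: eqe => //; lia.
have := eqe _ _ (ltn_trans ij jn) ln h1.
have := eqe _ _ jn (ltn_trans kl ln) h2.
lia.
Qed.

Theorem lemma4p6 (n : nat) :
  (2 < n)%N -> odd n ->
  forall a : algC, eigenvalue (c1_mat n) a ->
    mup a (char_poly (c1_mat n)) = 1%N.
Proof.
move=> Hn on a ea.
have n0 : (0 < n)%N by lia.
have [z pz] := C_prim_root_exists n0.
pose xs (k : nat) : algC := - z ^+ k.
have xsn k : xs k ^+ n = -1.
  rewrite exprNn -exprM mulnC exprM (prim_expr_order pz) expr1n mulr1.
  by rewrite -signr_odd on expr1.
pose ev (p : gr2_index n) : algC :=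
  n%:R * (xs (idx_pair p).1.+1 + xs (idx_pair p).2).
have evr p : root (char_poly (c1_mat n)) (ev p).
  rewrite -eigenvalue_root_char; apply: eig_c1 => //.
  have := idx_valid p; rewrite /valid2; case: (idx_pair p) => i j /= /andP[h1 h2].
  rewrite /xs eqr_opp (eq_prim_root_expr pz) !modn_small //; try lia.
have evi : injective ev.
  move=> p q; rewrite /ev => /mulfI.
  have -> : (n%:R : algC) != 0 by rewrite pnatr_eq0; lia.
  move=> /(_ isT) e.
  apply: idx_inj.
  move: (idx_valid p) (idx_valid q) e; rewrite /valid2 /xs.
  case: (idx_pair p) => i j; case: (idx_pair q) => k l /= /andP[h1 h2] /andP[h3 h4] e.
  have {}e : z^+j + z^+i.+1 = z^+l + z^+k.+1.
    by apply: oppr_inj; rewrite !opprD addrC e addrC.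
  have [] := roots_inj on pz _ _ e; try (apply/andP; split; lia).
  by move=> -> /eqP; rewrite eqSS => /eqP ->.
pose rs := map ev (enum (gr2_index n)).
have urs : uniq rs by rewrite map_inj_uniq // enum_uniq.
have Ecp : char_poly (c1_mat n) = \prod_(r <- rs) ('X - r%:P).
  have E := all_roots_prod_XsubC (p := char_poly (c1_mat n)) (rs := rs).
  rewrite {1}E.
  - by rewrite (monicP (char_poly_monic _)) scale1r.
  - by rewrite size_char_poly size_map -cardE.
  - by apply/allP => r /mapP [p _ ->].
  - by rewrite uniq_rootsE.
rewrite Ecp mu_prod_XsubC count_uniq_mem //.
have : root (char_poly (c1_mat n)) a by rewrite -eigenvalue_root_char.
by rewrite Ecp root_prod_XsubC => ->.
Qed.
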